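(* Let $\mu\in C^1[0,1]$ with $\mu\ge0$ and $\mu(1)\ne0$, and let $\Phi(z)=\int_0^1\mu(\alpha)z^\alpha\,d\alpha$. Then for every $z$ with $\operatorname{Re}z=\gamma>0$, $\operatorname{Re}(\Phi^{1/2}(z))\ge\frac{\sqrt2}{2}|\Phi^{1/2}(z)|$.
   Context: Powers $z^\alpha$ and $\Phi^{1/2}$ use the principal branch, with $\arg z\in(-\pi,\pi]$. *)

(* Defs.v *)
From Stdlib Require Import Reals.
From Coquelicot Require Import Coquelicot.
Open Scope R_scope.

(* Principal argument of a complex number, with values in (-PI, PI];
   carg 0 = 0 (irrelevant convention). *)
Definition carg (z : C) : R :=
  let x := Re z in let y := Im z in
  if Rlt_dec 0 x then atan (y / x)
  else if Rlt_dec x 0 then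
    (if Rle_dec 0 y then atan (y / x) + PI else atan (y / x) - PI)
  else
    if Rlt_dec 0 y then PI / 2
    else if Rlt_dec y 0 then - (PI / 2) else 0.

(* Principal power z^a = |z|^a e^{i a arg z} for real exponent a; 0^a := 0. *)
Definition cpow (z : C) (a : R) : C :=
  if Req_EM_T (Cmod z) 0 then (0, 0)
  else (Rpower (Cmod z) a * cos (a * carg z),
        Rpower (Cmod z) a * sin (a * carg z)).

Definition csqrt (w : C) : C := cpow w (1 / 2).

Definition Phi (mu : R -> R) (z : C) : C :=
  (RInt (fun a => mu a * Re (cpow z a)) 0 1,
   RInt (fun a => mu a * Im (cpow z a)) 0 1).

(* mu in C^1[0,1]: differentiable at every point of [0,1] (one-sided at the
   endpoints, i.e. derivative taken within [0,1]) with derivative continuous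
   on [0,1]. *)
Definition C1_01 (mu : R -> R) : Prop :=
  exists dmu : R -> R,
    (forall x, 0 <= x <= 1 ->
       filterlim (fun y => (mu y - mu x) / (y - x))
         (within (fun y => 0 <= y <= 1 /\ y <> x) (locally x))
         (locally (dmu x))) /\
    (forall x, 0 <= x <= 1 ->
       filterlim dmu (within (fun y => 0 <= y <= 1) (locally x))
         (locally (dmu x))).

(* Main.v *)
Require Import Defs.
From Stdlib Require Import Reals Lra Classical.
From Coquelicot Require Import Coquelicot.
Open Scope R_scope.

Lemma RInt01_ge0 (f : R -> R) :
  (forall x, 0 < x < 1 -> 0 <= f x) -> 0 <= RInt f 0 1.
Proof.
  intros H. destruct (classic (ex_RInt f 0 1)) as [Hi|Hn].
  - apply RInt_ge_0; auto; lra.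
  - change (0 <= R_complete_lim (fun A => forall x, is_RInt f 0 1 x -> A x)).
    unfold R_complete_lim.
    rewrite (is_lub_Rbar_unique _ p_infty). simpl; lra.
    { split.
      - intros x _. simpl. exact I.
      - intros b Hb. destruct b as [b| |]; simpl; auto.
        + exfalso. assert (Hx := Hb (b+1)). simpl in Hx.
          assert (b + 1 <= b).
          { apply Hx. intros y Hy. exfalso. apply Hn. exists y. exact Hy. }
          lra.
        + exfalso. assert (Hx := Hb 0). simpl in Hx. apply Hx.
          intros y Hy. exfalso. apply Hn. exists y. exact Hy. }
Qed.

Lemma cmod_polar (r t : R) : 0 <= r -> Cmod (r * cos t, r * sin t) = r.
Proof.
  intros Hr. unfold Cmod. simpl.
  match goal with |- sqrt ?e = _ => replace e with (r * r) end.
  apply sqrt_square. exact Hr.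
  pose proof (sin2_cos2 t) as E. unfold Rsqr in E.
  transitivity (r * r * (sin t * sin t + cos t * cos t)); [rewrite E; ring| ring].
Qed.

Lemma carg_bound (w : C) : 0 <= Re w -> - (PI/2) <= carg w <= PI/2.
Proof.
  intros H. unfold carg.
  destruct (Rlt_dec 0 (Re w)).
  - pose proof (atan_bound (Im w / Re w)). lra.
  - destruct (Rlt_dec (Re w) 0); [lra|].
    destruct (Rlt_dec 0 (Im w)). pose proof PI_RGT_0; lra.
    destruct (Rlt_dec (Im w) 0); pose proof PI_RGT_0; lra.
Qed.

Lemma carg_bound_strict (w : C) : 0 < Re w -> - (PI/2) < carg w < PI/2.
Proof.
  intros H. unfold carg. destruct (Rlt_dec 0 (Re w)); [|lra].
  pose proof (atan_bound (Im w / Re w)). lra.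
Qed.

Lemma cos_ge_half (t : R) : - (PI/2) <= t <= PI/2 -> sqrt 2 / 2 <= cos (t / 2).
Proof.
  intros Ht.
  assert (E : sqrt 2 / 2 = cos (PI/4)).
  { rewrite cos_PI4. assert (0 < sqrt 2) by (apply sqrt_lt_R0; lra).
    assert (Hs: sqrt 2 * sqrt 2 = 2) by (apply sqrt_sqrt; lra).
    field_simplify_eq; [nra|lra]. }
  rewrite E. pose proof PI_RGT_0.
  destruct (Rle_dec 0 t).
  - destruct (Req_dec (t/2) (PI/4)) as [e|e]. rewrite e; lra.
    left. apply cos_decreasing_1; lra.
  - replace (t/2) with (- (-t/2)) by field. rewrite cos_neg.
    destruct (Req_dec (-t/2) (PI/4)) as [e|e]. rewrite e; lra.
    left. apply cos_decreasing_1; lra.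
Qed.

Theorem mainTheorem4 (mu : R -> R) :
  C1_01 mu ->
  (forall a, 0 <= a <= 1 -> 0 <= mu a) ->
  mu 1 <> 0 ->
  forall z : C, 0 < Re z ->
    Re (csqrt (Phi mu z)) >= sqrt 2 / 2 * Cmod (csqrt (Phi mu z)).
Proof.
  intros _ Hmu _ z Hz.
  assert (HRe : 0 <= Re (Phi mu z)).
  { unfold Phi. simpl. apply RInt01_ge0. intros a Ha.
    apply Rmult_le_pos. apply Hmu; lra.
    unfold cpow. destruct (Req_EM_T (Cmod z) 0). simpl; lra.
    simpl. apply Rmult_le_pos. unfold Rpower. left; apply exp_pos.
    pose proof (carg_bound_strict z Hz). pose proof PI_RGT_0.
    apply cos_ge_0.
    - assert (a * carg z >= a * (- (PI/2))) by (apply Rmult_ge_compat_l; lra). nra.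
    - assert (a * carg z <= a * (PI/2)) by (apply Rmult_le_compat_l; lra). nra. }
  set (w := Phi mu z) in *.
  unfold csqrt, cpow. destruct (Req_EM_T (Cmod w) 0).
  - simpl. assert (E0 : Cmod (0, 0) = 0) by apply Cmod_0. rewrite E0. lra.
  - assert (Hr : 0 <= Rpower (Cmod w) (1/2)) by (unfold Rpower; left; apply exp_pos).
    rewrite cmod_polar by exact Hr. simpl.
    pose proof (cos_ge_half _ (carg_bound w HRe)).
    replace (1/2 * carg w) with (carg w / 2) by field.
    apply Rle_ge. rewrite Rmult_comm. apply Rmult_le_compat_l; lra.
Qed.
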